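(* Let $V$ be a finite node set with $|V|=n$ and let $E,E'$ be edge sets of simple undirected graphs on $V$ whose symmetric difference has at most $K$ edges. For an edge set $F$ let $A(F)$ be its adjacency matrix, $D(F)$ the diagonal matrix of self-loop-augmented degrees $\tilde d_v=\deg_F(v)+1$, and $\tilde A(F)=D(F)^{-1/2}(A(F)+I)D(F)^{-1/2}$. Let $\tilde d_{\min}$ and $\tilde d_{\max}$ be the minimum and maximum self-loop-augmented degrees over the graphs $(V,E)$ and $(V,E')$, and assume $\tilde d_{\max}/\tilde d_{\min}\le c$. Then \[ \|\tilde A(E')-\tilde A(E)\|_2\le C\,\frac{K}{\tilde d_{\min}}, \] where $\|\cdot\|_2$ is the spectral norm and $C$ is a constant depending only on $c$. *)

(* Defs.v *)
From HB Require Import structures.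
From mathcomp Require Import all_boot all_order all_algebra.
From mathcomp Require Import classical_sets reals.
Set Implicit Arguments. Unset Strict Implicit. Unset Printing Implicit Defensive.
Import Order.TTheory GRing.Theory Num.Theory.
Local Open Scope ring_scope.

(* Node set V = 'I_n; an edge set F is a set of 2-element subsets of V
   (simple undirected graph: no loops, no multi-edges). *)
Definition simple_edges n (F : {set {set 'I_n}}) : Prop :=
  forall e, e \in F -> #|e| = 2%N.

Definition deg n (F : {set {set 'I_n}}) (v : 'I_n) : nat :=
  #|[set u : 'I_n | [set u; v] \in F]|.

Definition aug_deg n (F : {set {set 'I_n}}) (v : 'I_n) : nat := (deg F v).+1.

Definition adj (R : ringType) n (F : {set {set 'I_n}}) : 'M[R]_n :=
  \matrix_(u, v) (([set u; v] \in F) : nat)%:R.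

Definition Dinvsqrt (R : rcfType) n (F : {set {set 'I_n}}) : 'M[R]_n :=
  diag_mx (\row_v (Num.sqrt ((aug_deg F v)%:R : R))^-1).

Definition norm_adj (R : rcfType) n (F : {set {set 'I_n}}) : 'M[R]_n :=
  Dinvsqrt R F *m (adj R F + 1%:M) *m Dinvsqrt R F.

Definition vnorm2 (R : rcfType) n (x : 'cV[R]_n) : R :=
  Num.sqrt (\sum_i x i ord0 ^+ 2).

Definition spectral_norm (R : realType) n (M : 'M[R]_n) : R :=
  sup [set vnorm2 (M *m x) | x in [set x : 'cV[R]_n | vnorm2 x <= 1]]%classic.

Definition symdiff n (E E' : {set {set 'I_n}}) : {set {set 'I_n}} :=
  (E :\: E') :|: (E' :\: E).

(* min / max self-loop-augmented degree over both graphs (V nonempty;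
   the identity n of the min is never attained-below since aug degrees <= n) *)
Definition dmin n (E E' : {set {set 'I_n}}) : nat :=
  \big[minn/n]_(v < n) minn (aug_deg E v) (aug_deg E' v).
Definition dmax n (E E' : {set {set 'I_n}}) : nat :=
  \max_(v < n) maxn (aug_deg E v) (aug_deg E' v).

(* Main.v *)
Require Import Defs.
From HB Require Import structures.
From mathcomp Require Import all_boot all_order all_algebra.
From mathcomp Require Import classical_sets reals.
From mathcomp Require Import ring lra.
Import Order.TTheory GRing.Theory Num.Theory.
Set Implicit Arguments. Unset Strict Implicit.
Local Open Scope ring_scope.

Lemma alg (R : realFieldType) (t pu pv qu qv a a' e du dv : R) :
  0 < t -> 0 <= pu <= t -> 0 <= pv <= t -> 0 <= qu <= t -> 0 <= qv <= t ->
  `|qu - pu| <= du * t ^+ 3 -> `|qv - pv| <= dv * t ^+ 3 -> 0 <= a + e ->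
  `|qu * (a' + e) * qv - pu * (a + e) * pv|
    <= `|a' - a| * t ^+ 2 + (a + e) * (du + dv) * t ^+ 4.
Proof.
move=> t0 /andP[pu0 pu1] /andP[pv0 pv1] /andP[qu0 qu1] /andP[qv0 qv1] hu hv b0.
have -> : qu * (a' + e) * qv - pu * (a + e) * pv
   = (a' - a) * (qu * qv) + (a + e) * ((qu - pu) * qv + pu * (qv - pv)) by ring.
apply: le_trans (ler_normD _ _) _; apply: lerD.
  rewrite normrM; apply: ler_wpM2l => //.
  by rewrite ger0_norm ?mulr_ge0 // expr2 ler_pM.
rewrite normrM (ger0_norm b0) -mulrA; apply: ler_wpM2l => //.
apply: le_trans (ler_normD _ _) _.
rewrite !normrM (ger0_norm qv0) (ger0_norm pu0).
have -> : (du + dv) * t ^+ 4 = du * t ^+ 3 * t + t * (dv * t ^+ 3) by ring.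
apply: lerD.
  by apply: ler_pM.
by apply: ler_pM.
Qed.

Lemma invsqrt_diff (R : realType) (m x y : R) :
  0 < m -> m <= x -> m <= y ->
  `|(Num.sqrt y)^-1 - (Num.sqrt x)^-1| <= `|y - x| * (Num.sqrt m)^-1 ^+ 3.
Proof.
move=> m0 mx my.
have x0 : 0 < x by apply: lt_le_trans mx.
have y0 : 0 < y by apply: lt_le_trans my.
set a := Num.sqrt x; set b := Num.sqrt y; set s := Num.sqrt m.
have s0 : 0 < s by rewrite sqrtr_gt0.
have a0 : 0 < a by rewrite sqrtr_gt0.
have b0 : 0 < b by rewrite sqrtr_gt0.
have sa : s <= a by rewrite ler_sqrt // ltW.
have sb : s <= b by rewrite ler_sqrt // ltW.
have ex : x = a ^+ 2 by rewrite sqr_sqrtr // ltW.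
have ey : y = b ^+ 2 by rewrite sqr_sqrtr // ltW.
have ia : a^-1 <= s^-1 by rewrite lef_pV2 ?posrE.
have ib : b^-1 <= s^-1 by rewrite lef_pV2 ?posrE.
have ia0 : 0 <= a^-1 by rewrite invr_ge0 ltW.
have ib0 : 0 <= b^-1 by rewrite invr_ge0 ltW.
have h1 : 1 <= (a + b) * s^-1.
  rewrite -(divff (lt0r_neq0 s0)) ler_wpM2r ?invr_ge0 ?ltW //.
  by apply: le_lt_trans sa _; rewrite ltrDl.
have -> : b^-1 - a^-1 = (a - b) * (a^-1 * b^-1).
  by field; rewrite (lt0r_neq0 a0) (lt0r_neq0 b0).
have -> : y - x = (a - b) * (- (a + b)) by rewrite ex ey; ring.
rewrite !normrM -mulrA; apply: ler_wpM2l => //.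
rewrite normrN (ger0_norm ia0) (ger0_norm ib0) ger0_norm; last first.
  by rewrite addr_ge0 // ltW.
have -> : (a + b) * s^-1 ^+ 3 = ((a + b) * s^-1) * (s^-1 * s^-1) by ring.
rewrite -[X in X <= _]mul1r; apply: ler_pM => //.
  by rewrite mulr_ge0.
by apply: ler_pM.
Qed.
Definition nbr n (F : {set {set 'I_n}}) (u : 'I_n) := [set v | [set u; v] \in F].

Lemma deg_nbr n (F : {set {set 'I_n}}) u : deg F u = #|nbr F u|.
Proof. by apply: eq_card => w; rewrite !finset.in_set finset.setUC. Qed.

Lemma sum_row (R : nzRingType) n (F : {set {set 'I_n}}) u :
  \sum_(v : 'I_n) (([set u; v] \in F) : nat)%:R = (deg F u)%:R :> R.
Proof.
rewrite -natr_sum deg_nbr -sum1_card; congr (_%:R); rewrite [RHS]big_mkcond /=.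
by apply: eq_bigr => v _; rewrite finset.in_set; case: (_ \in F).
Qed.

Lemma sum_col (R : nzRingType) n (F : {set {set 'I_n}}) v :
  \sum_(u : 'I_n) (([set u; v] \in F) : nat)%:R = (deg F v)%:R :> R.
Proof.
rewrite -natr_sum /deg -sum1_card; congr (_%:R); rewrite [RHS]big_mkcond /=.
by apply: eq_bigr => u _; rewrite finset.in_set; case: (_ \in F).
Qed.

Lemma set2_inj n (u v w : 'I_n) : [set u; v] = [set u; w] -> v = w.
Proof.
move=> h.
have hv : v \in [set u; w] by rewrite -h !inE eqxx orbT.
have hw : w \in [set u; v] by rewrite h !inE eqxx orbT.
move: hv hw; rewrite !inE => /orP [/eqP->|/eqP->//] /orP [/eqP->//|/eqP->//].
Qed.

Lemma deg_le_inc n (S : {set {set 'I_n}}) u :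
  (deg S u <= #|[set e in S | u \in e]|)%N.
Proof.
rewrite deg_nbr -(card_in_imset (f := fun v => [set u; v])); last first.
  by move=> v w _ _; exact: set2_inj.
apply: subset_leq_card; apply/fintype.subsetP => _ /imsetP [v hv ->].
by move: hv; rewrite !inE => ->; rewrite eqxx.
Qed.

Lemma sum_deg_le n (S : {set {set 'I_n}}) :
  simple_edges S -> (\sum_(u : 'I_n) deg S u <= 2 * #|S|)%N.
Proof.
move=> hS.
apply: (@leq_trans (\sum_(u : 'I_n) #|[set e in S | u \in e]|)).
  by apply: leq_sum => u _; exact: deg_le_inc.
have -> : \sum_(u : 'I_n) #|[set e in S | u \in e]| =
          \sum_(u : 'I_n) \sum_(e in S) ((u \in e) : nat).
  apply: eq_bigr => u _; rewrite -sum1_card big_mkcond [RHS]big_mkcond /=.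
  by apply: eq_bigr => e _; rewrite !inE; case: (e \in S); case: (u \in e).
rewrite exchange_big /= -sum1_card big_distrr /= leq_eqVlt; apply/orP; left.
apply/eqP; apply: eq_bigr => e he; rewrite muln1 -(hS e he) -sum1_card.
by rewrite [RHS]big_mkcond /=; apply: eq_bigr => u _; case: (u \in e).
Qed.

Lemma bigmin_le_mem (T : eqType) (r : seq T) x (F : T -> nat) i :
  i \in r -> (\big[minn/x]_(j <- r) F j <= F i)%N.
Proof.
elim: r => [//|a r IH]; rewrite inE big_cons => /orP [/eqP->|/IH h].
  exact: geq_minl.
exact: leq_trans (geq_minr _ _) h.
Qed.

Lemma dmin_le n (E E' : {set {set 'I_n}}) v :
  (dmin E E' <= aug_deg E v)%N /\ (dmin E E' <= aug_deg E' v)%N.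
Proof.
have h : (dmin E E' <= minn (aug_deg E v) (aug_deg E' v))%N.
  by apply: bigmin_le_mem; rewrite mem_index_enum.
by split; apply: leq_trans h _; [exact: geq_minl | exact: geq_minr].
Qed.

Lemma dmin_gt0 n (E E' : {set {set 'I_n}}) : (0 < n)%N -> (0 < dmin E E')%N.
Proof.
move=> hn; rewrite /dmin; apply: (big_ind (fun x => 0 < x)%N) => //.
  by move=> a b ha hb; rewrite leq_min ha hb.
by move=> i _; rewrite leq_min.
Qed.

Lemma le_dmax n (E E' : {set {set 'I_n}}) v :
  (aug_deg E v <= dmax E E')%N /\ (aug_deg E' v <= dmax E E')%N.
Proof.
have h : (maxn (aug_deg E v) (aug_deg E' v) <= dmax E E')%N.
  rewrite /dmax; exact: (@leq_bigmax _ (fun v : 'I_n => maxn (aug_deg E v) (aug_deg E' v)) v).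
by split; apply: leq_trans _ h; [exact: leq_maxl | exact: leq_maxr].
Qed.

Lemma deg_diff (R : realFieldType) n (E E' : {set {set 'I_n}}) u :
  `|(deg E u)%:R - (deg E' u)%:R : R| <= (deg (symdiff E E') u)%:R.
Proof.
have h1 : forall F G : {set {set 'I_n}}, (deg F u <= deg G u + deg (symdiff F G) u)%N.
  move=> F G; rewrite !deg_nbr.
  apply: leq_trans (leq_card_setU _ _).
  apply: subset_leq_card; apply/fintype.subsetP => v; rewrite !finset.in_set. move=> ->.
  by case: ([set u; v] \in G).
have e : symdiff E' E = symdiff E E' by rewrite /symdiff finset.setUC.
have a := h1 E E'; have b := h1 E' E; rewrite e in b.
move: a b; rewrite -!(ler_nat R) !natrD => a b.
rewrite ler_norml; apply/andP; split; lra.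
Qed.
Lemma norm_le_sum (R : realType) n (y : 'cV[R]_n) :
  vnorm2 y <= \sum_i `|y i ord0|.
Proof.
set T := \sum_i `|y i ord0|.
have T0 : 0 <= T by apply: sumr_ge0.
rewrite /vnorm2 -(ger0_norm T0) -sqrtr_sqr ler_sqrt ?exprn_ge0 //.
rewrite expr2 mulr_suml; apply: ler_sum => i _.
rewrite -real_normK ?num_real // expr2; apply: ler_wpM2l => //.
by rewrite /T (bigD1 i) //= lerDl sumr_ge0.
Qed.

Lemma coord_le1 (R : realType) n (x : 'cV[R]_n) j :
  vnorm2 x <= 1 -> `|x j ord0| <= 1.
Proof.
move=> h.
have hs : \sum_i x i ord0 ^+ 2 <= 1.
  by rewrite -(ler_sqrt _ ler01) sqrtr1.
have : x j ord0 ^+ 2 <= 1.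
  apply: le_trans hs; rewrite (bigD1 j) //= lerDl sumr_ge0 // => i _.
  exact: sqr_ge0.
by rewrite -(ler_sqrt _ ler01) sqrtr1 sqrtr_sqr.
Qed.

Lemma spec_le (R : realType) n (M : 'M[R]_n) :
  spectral_norm M <= \sum_i \sum_j `|M i j|.
Proof.
apply: ge_sup.
  exists (vnorm2 (M *m 0)); exists 0 => //.
  by rewrite /= /vnorm2 big1 ?sqrtr0 // => i _; rewrite mxE expr0n.
move=> _ [x Hx <-].
apply: le_trans (norm_le_sum (M *m x)) _.
apply: ler_sum => i _; rewrite mxE.
apply: le_trans (ler_norm_sum _ _ _) _.
apply: ler_sum => j _; rewrite normrM.
apply: ler_piMr => //; exact: coord_le1.
Qed.

Lemma norm_adj_entry (R : realType) n (F : {set {set 'I_n}}) u v :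
  norm_adj R F u v = (Num.sqrt (aug_deg F u)%:R)^-1 *
     ((([set u; v] \in F) : nat)%:R + (u == v)%:R) * (Num.sqrt (aug_deg F v)%:R)^-1.
Proof. by rewrite /norm_adj /Dinvsqrt mul_diag_mx mul_mx_diag !mxE. Qed.

Lemma sub_entry (R : realType) n (A B : 'M[R]_n) u v : (A - B) u v = A u v - B u v.
Proof. by rewrite !mxE. Qed.

Unset Implicit Arguments.

Theorem lemma5p3 (R : realType) (c : R) :
  exists C : R,
  forall (n : nat) (E E' : {set {set 'I_n}}) (K : nat),
    (0 < n)%N ->
    simple_edges E -> simple_edges E' ->
    (#|symdiff E E'| <= K)%N ->
    (dmax E E')%:R / (dmin E E')%:R <= c ->
    spectral_norm (norm_adj R E' - norm_adj R E)
      <= C * (K%:R / (dmin E E')%:R).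
Proof.
exists (2 + 4 * c) => n E E' K hn hE hE' hK hc.
set S := symdiff E E'.
have hS : simple_edges S.
  move=> e; rewrite /S /symdiff !inE => /orP [/andP [_ h]|/andP [_ h]].
    exact: hE.
  exact: hE'.
have m0n := dmin_gt0 E E' hn.
have hmin := dmin_le E E'.
have hmax := le_dmax E E'.
set m := dmin E E' in hc m0n hmin *.
set dM := dmax E E' in hc hmax *.
have m0 : 0 < m%:R :> R by rewrite ltr0n.
set t := (Num.sqrt (m%:R : R))^-1.
have t0 : 0 < t by rewrite invr_gt0 sqrtr_gt0.
have t2 : t ^+ 2 = (m%:R)^-1 by rewrite /t exprVn sqr_sqrtr // ltW.
have t4 : t ^+ 4 = (m%:R)^-1 ^+ 2 by rewrite -t2 -exprM.
pose dl u := (deg S u)%:R : R.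
have dl0 : forall u, 0 <= dl u by move=> u; rewrite /dl ler0n.
have hp : forall (F : {set {set 'I_n}}) u, (m <= aug_deg F u)%N ->
    0 <= (Num.sqrt (aug_deg F u)%:R)^-1 <= t.
  move=> F u h; rewrite invr_ge0 sqrtr_ge0 /= /t lef_pV2 ?posrE ?sqrtr_gt0 ?ltr0Sn //.
  by rewrite ler_sqrt ?ler0n // ler_nat.
have hdiff : forall u, `|(Num.sqrt (aug_deg E' u)%:R)^-1 - (Num.sqrt (aug_deg E u)%:R)^-1|
    <= dl u * t ^+ 3.
  move=> u; have [h1 h2] := hmin u.
  have h1' : (m%:R : R) <= (aug_deg E u)%:R by rewrite ler_nat.
  have h2' : (m%:R : R) <= (aug_deg E' u)%:R by rewrite ler_nat.
  have h := invsqrt_diff m0 h1' h2'.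
  apply: (le_trans h); apply: ler_wpM2r; first by rewrite exprn_ge0 // invr_ge0 sqrtr_ge0.
  rewrite /aug_deg !mulrS opprD addrACA subrr add0r distrC; exact: deg_diff.
have entry : forall u v, `|(norm_adj R E' - norm_adj R E) u v| <=
   (([set u; v] \in S) : nat)%:R * t ^+ 2 +
   ((([set u; v] \in E) : nat)%:R + (u == v)%:R) * (dl u + dl v) * t ^+ 4.
  move=> u v; rewrite sub_entry !norm_adj_entry.
  have [hu1 hu2] := hmin u; have [hv1 hv2] := hmin v.
  have -> : (([set u; v] \in S) : nat)%:R =
     `|(([set u; v] \in E') : nat)%:R - (([set u; v] \in E) : nat)%:R| :> R.
    rewrite /S /symdiff !inE.
    by case: ([set u; v] \in E); case: ([set u; v] \in E');
      rewrite /= ?subrr ?normr0 ?subr0 ?sub0r ?normrN ?normr1.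
  apply: alg => //; try exact: hp; try exact: hdiff.
  by rewrite addr_ge0.
apply: le_trans (spec_le _) _.
have step1 : \sum_u \sum_v `|(norm_adj R E' - norm_adj R E) u v| <=
   \sum_u \sum_v ((([set u; v] \in S) : nat)%:R * t ^+ 2 +
   ((([set u; v] \in E) : nat)%:R + (u == v)%:R) * (dl u + dl v) * t ^+ 4).
  by apply: ler_sum => u _; apply: ler_sum => v _; exact: entry.
apply: le_trans step1 _.
pose b (u v : 'I_n) : R := (([set u; v] \in E) : nat)%:R + (u == v)%:R.
have rowb : forall u, \sum_v b u v = (aug_deg E u)%:R.
  move=> u; rewrite big_split /= sum_row (bigD1 u) //= eqxx big1 ?addr0.
    by rewrite /aug_deg (mulrS 1 (deg E _)) addrC.
  by move=> v; rewrite eq_sym => /negbTE ->.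
have colb : forall v, \sum_u b u v = (aug_deg E v)%:R.
  move=> v; rewrite big_split /= sum_col (bigD1 v) //= eqxx big1 ?addr0.
    by rewrite /aug_deg (mulrS 1 (deg E _)) addrC.
  by move=> u /negbTE ->.
pose D := \sum_u dl u.
have D0 : 0 <= D by apply: sumr_ge0.
have DK : D <= 2 * K%:R.
  rewrite /D /dl -natr_sum -natrM ler_nat.
  apply: leq_trans (sum_deg_le hS) _; by rewrite leq_mul2l hK orbT.
have aM : forall u, (aug_deg E u)%:R <= dM%:R :> R.
  by move=> u; rewrite ler_nat; case: (hmax u).
have sum1 : \sum_u \sum_v b u v * dl u <= dM%:R * D.
  rewrite /D mulr_sumr; apply: ler_sum => u _.
  rewrite -mulr_suml rowb; exact: ler_wpM2r.
have sum2 : \sum_u \sum_v b u v * dl v <= dM%:R * D.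
  rewrite exchange_big /D mulr_sumr; apply: ler_sum => v _ /=.
  rewrite -mulr_suml colb; exact: ler_wpM2r.
have -> : \sum_u \sum_v ((([set u; v] \in S) : nat)%:R * t ^+ 2 +
   ((([set u; v] \in E) : nat)%:R + (u == v)%:R) * (dl u + dl v) * t ^+ 4)
  = D * t ^+ 2 + (\sum_u \sum_v b u v * dl u + \sum_u \sum_v b u v * dl v) * t ^+ 4.
  rewrite /D mulr_suml mulrDl !mulr_suml -!big_split /=.
  apply: eq_bigr => u _.
  have e1 : dl u = \sum_v (([set u; v] \in S) : nat)%:R by rewrite /dl sum_row.
  rewrite [in dl u * t ^+ 2]e1 !mulr_suml -!big_split /=.
  apply: eq_bigr => v _; rewrite /b; ring.
set s1 := \sum_u \sum_v b u v * dl u in sum1 *.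
set s2 := \sum_u \sum_v b u v * dl v in sum2 *.
rewrite t2 t4.
set x := dM%:R / m%:R in hc.
have x0 : 0 <= x by rewrite /x divr_ge0 ?ler0n.
have s10 : 0 <= s1 by apply: sumr_ge0 => u _; apply: sumr_ge0 => v _; rewrite mulr_ge0 // /b addr_ge0 ?ler0n.
have s20 : 0 <= s2 by apply: sumr_ge0 => u _; apply: sumr_ge0 => v _; rewrite mulr_ge0 // /b addr_ge0 ?ler0n.
have mi0 : 0 < (m%:R : R)^-1 by rewrite invr_gt0.
set y := D * (m%:R)^-1.
set z := K%:R / (m%:R : R).
have yz : y <= 2 * z by rewrite /y /z mulrA ler_pM2r.
have y0 : 0 <= y by rewrite /y mulr_ge0 // ltW.
have z0 : 0 <= z by rewrite /z divr_ge0 ?ler0n.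
have hs : (s1 + s2) * (m%:R)^-1 ^+ 2 <= 2 * x * y.
  have hs1 : (s1 + s2) * (m%:R)^-1 ^+ 2 <= (2 * dM%:R * D) * (m%:R)^-1 ^+ 2.
    by apply: ler_wpM2r; [rewrite exprn_ge0 // ltW | lra].
  apply: (le_trans hs1).
  by rewrite /x /y expr2 le_eqVlt; apply/orP; left; apply/eqP; ring.
nra.
Qed.
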